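(* Let $S$ be a numerical semigroup with minimal generators $e<a_1<\dots<a_t$, and let $s\in S$ and $r\in\mathbb N$. (1) If $\mathbf x=(x_0,\dots,x_t)$ is an $S$-factorization of $s$ of length $r$, then $(0,x_1,\dots,x_t)$ is a $B^{\mathcal D}$-factorization of $s-re$ of length at most $r$. (2) If $\mathbf y=(y_0,\dots,y_t)$ is a $B^{\mathcal D}$-factorization of $s-re$ of length at most $r$, then $(2y_0+r-|\mathbf y|,y_1,\dots,y_t)$ is an $S$-factorization of $s$ of length $r+y_0$; in particular ${\rm ord}(s;S)\ge r$.
   Context: A numerical semigroup is a submonoid of $(\mathbb N,+)$ with finite complement. An $S$-factorization of $n\in S$ is $(c_0,\dots,c_t)\in\mathbb N^{t+1}$ with $c_0e+\sum_{i\ge1}c_ia_i=n$; its length is $\sum c_i$. ${\rm ord}(n;S)$ is the maximal such length. Let $d_i=a_i-e$, let $B=\langle e,d_1,\dots,d_t\rangle$ be the blowup, and $\mathcal D=(e,d_1,\dots,d_t)$. A $B^{\mathcal D}$-factorization of an integer $b$ is $(x_0,\dots,x_t)\in\mathbb N^{t+1}$ with $x_0e+\sum_{i\ge1}x_id_i=b$; its length $|\mathbf x|$ is $\sum x_i$. *)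

(* Defs.v *)
From mathcomp Require Import all_boot all_order all_algebra.
Set Implicit Arguments. Unset Strict Implicit. Unset Printing Implicit Defensive.
Import GRing.Theory Num.Theory.

(* Generators: e (index 0) and a_1 < ... < a_t, represented as a : 'I_t -> nat
   (a i is a_{i+1}).  A factorization (c_0,c_1,...,c_t) is a pair
   (c0 : nat, c : 'I_t -> nat). *)

Definition numerical_semigroup (S : pred nat) : Prop :=
  [/\ 0 \in S,
      (forall m n, m \in S -> n \in S -> m + n \in S) &
      exists N, forall n, N <= n -> n \in S].

Definition flen (t : nat) (c0 : nat) (c : 'I_t -> nat) : nat :=
  (c0 + \sum_(i < t) c i)%N.

Definition S_fact (t e : nat) (a : 'I_t -> nat) (n : nat)
    (c0 : nat) (c : 'I_t -> nat) : Prop :=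
  (c0 * e + \sum_(i < t) c i * a i)%N = n.

Definition B_fact (t e : nat) (a : 'I_t -> nat) (b : int)
    (x0 : nat) (x : 'I_t -> nat) : Prop :=
  (x0%:Z * e%:Z + \sum_(i < t) (x i)%:Z * ((a i)%:Z - e%:Z))%R = b.

Definition min_gens (S : pred nat) (t e : nat) (a : 'I_t -> nat) : Prop :=
  [/\ (forall n, n \in S <-> exists c0 c, S_fact e a n c0 c),
      (forall i, e < a i),
      (forall i j : 'I_t, i < j -> a i < a j),
      ~ (exists c : 'I_t -> nat, (\sum_(i < t) c i * a i)%N = e) &
      (forall i, ~ (exists c0 (c : 'I_t -> nat), c i = 0 /\ S_fact e a (a i) c0 c))].

(* ord(n;S): maximal length of an S-factorization of n.  Since every
   generator is >= 1, every component of a factorization of n is <= n and its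
   length is <= n, so a bounded search is exhaustive. *)
Definition has_fact_len (t e : nat) (a : 'I_t -> nat) (n l : nat) : bool :=
  [exists c0 : 'I_n.+1, exists c : {ffun 'I_t -> 'I_n.+1},
     ((c0 * e + \sum_(i < t) c i * a i)%N == n) &&
     ((c0 + \sum_(i < t) c i)%N == l)].

Definition ord (t e : nat) (a : 'I_t -> nat) (n : nat) : nat :=
  \max_(l < n.+1 | has_fact_len e a n l) l.

(* Main.v *)
Require Import Defs.
From mathcomp Require Import all_boot all_order all_algebra.
From mathcomp Require Import zify.
Import GRing.Theory Num.Theory.

Lemma Bnat (t e : nat) (a : 'I_t -> nat) b x0 (x : 'I_t -> nat) :
  (forall i, e < a i) ->
  B_fact e a b x0 x <-> b = Posz (x0*e + \sum_(i < t) x i * (a i - e))%N.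
Proof.
move=> H; rewrite /B_fact.
have -> : (\sum_(i < t) (x i)%:Z * ((a i)%:Z - e%:Z))%R
        = Posz (\sum_(i < t) x i * (a i - e))%N.
  rewrite (big_morph Posz PoszD (erefl (Posz 0))).
  by apply: eq_bigr => i _; rewrite (subzn (ltnW (H i))) -PoszM.
by rewrite -PoszM -PoszD; split => <-.
Qed.

Lemma Ssplit (t e : nat) (a : 'I_t -> nat) (x : 'I_t -> nat) :
  (forall i, e < a i) ->
  (\sum_(i < t) x i * a i = \sum_(i < t) x i * (a i - e) + (\sum_(i < t) x i) * e)%N.
Proof.
move=> H; rewrite big_distrl -big_split /=.
by apply: eq_bigr => i _; rewrite -mulnDr subnK // ltnW.
Qed.

Theorem lemma2p2 (S : pred nat) (t e : nat) (a : 'I_t -> nat) (s r : nat) :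
  numerical_semigroup S -> min_gens S e a -> s \in S ->
  (forall (x0 : nat) (x : 'I_t -> nat),
      S_fact e a s x0 x -> flen x0 x = r ->
      B_fact e a (s%:Z - (r * e)%:Z)%R 0 x /\ flen 0 x <= r) /\
  (forall (y0 : nat) (y : 'I_t -> nat),
      B_fact e a (s%:Z - (r * e)%:Z)%R y0 y -> flen y0 y <= r ->
      [/\ S_fact e a s (2 * y0 + r - flen y0 y) y,
          flen (2 * y0 + r - flen y0 y) y = r + y0
        & r <= ord e a s]).
Proof.
move=> _ [_ Hgt _ He _] _.
have e0 : 0 < e.
  case: (posnP e) => // e0; exfalso; apply: He; exists (fun _ => 0).
  by rewrite e0 big1.
split.
  move=> x0 x; rewrite /S_fact /flen (Ssplit _ _ _ x Hgt) => Hs Hr.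
  rewrite Bnat //; split; last by lia.
  have -> : (s%:Z - (r * e)%:Z)%R = Posz (s - r * e)%N.
    by rewrite subzn //; lia.
  congr Posz; nia.
move=> y0 y; rewrite Bnat // /flen => Hb Hr.
set Sy := (\sum_(i < t) y i) in Hr *.
set Sd := (\sum_(i < t) y i * (a i - e)) in Hb.
have Hs : s = (y0 * e + Sd + r * e)%N.
  have : (s%:Z = Posz (y0 * e + Sd)%N + (r * e)%:Z)%R by rewrite -Hb subrK.
  by rewrite -PoszD => -[].
have SF : S_fact e a s (2 * y0 + r - (y0 + Sy)) y.
  rewrite /S_fact (Ssplit _ _ _ y Hgt) -/Sy -/Sd Hs.
  have -> : (2 * y0 + r - (y0 + Sy) = y0 + (r - Sy))%N by lia.
  nia.
have FL : (2 * y0 + r - (y0 + Sy) + Sy = r + y0)%N by lia.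
split => //.
have Hc0 : (2 * y0 + r - (y0 + Sy) < s.+1)%N.
  move: SF; rewrite /S_fact => <-; nia.
have Hci : forall i, y i < s.+1.
  move=> i; move: SF; rewrite /S_fact => <-.
  rewrite ltnS (bigD1 i) //=.
  have := Hgt i; nia.
have Hl : has_fact_len e a s (r + y0).
  apply/existsP; exists (Ordinal Hc0).
  apply/existsP; exists [ffun i => Ordinal (Hci i)].
  apply/andP; split; apply/eqP.
    apply: (etrans _ SF) => /=; congr (_ + _)%N; apply: eq_bigr => i _; by rewrite ffunE.
  apply: (etrans _ FL) => /=; congr (_ + _)%N; apply: eq_bigr => i _; by rewrite ffunE.
have Hrs : (r + y0 < s.+1)%N.
  move: Hl => /existsP [c0] /existsP [c] /andP [/eqP E1 /eqP E2].
  rewrite ltnS -E1 -E2 leq_add //; first by nia.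
  apply: leq_sum => i _; have := Hgt i; nia.
apply: (leq_trans (leq_addr y0 r)).
exact: (@leq_bigmax_cond _ (fun l : 'I_s.+1 => has_fact_len e a s l) (fun l => nat_of_ord l) (Ordinal Hrs) Hl).
Qed.
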